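(* Let $f:\mathbb{R}^d\to\mathbb{R}$ be subdifferentially polynomially bounded (SPB) with parameters $\mathrm{R}_1\ge 0$, $\mathrm{R}_2>0$ and integer $m\ge 0$. Then for all $x,y\in\mathbb{R}^d$, \[ |f(x)-f(y)|\le\big(2^{m-1}\mathrm{R}_1\|x\|^m+2^{m-1}\mathrm{R}_1\|y-x\|^m+\mathrm{R}_2\big)\|x-y\|. \]
   Context: $\|\cdot\|$ is the Euclidean norm. For a locally Lipschitz $f:\mathbb{R}^d\to\mathbb{R}$, $\partial_C f(x)$ denotes the Clarke subdifferential. $f$ is called SPB with parameters $\mathrm{R}_1\ge0$, $\mathrm{R}_2>0$ and integer $m\ge 0$ (where $\mathrm{R}_1=0$ if and only if $m=0$) if $f$ is locally Lipschitz and $\sup_{\zeta\in\partial_C f(x)}\|\zeta\|\le \mathrm{R}_1\|x\|^m+\mathrm{R}_2$ for all $x\in\mathbb{R}^d$. The convention $0^0=1$ is used. *)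

(* Defs.v *)
From HB Require Import structures.
From mathcomp Require Import all_boot all_order all_algebra.
From mathcomp Require Import all_classical all_reals ereal.
Set Implicit Arguments. Unset Strict Implicit. Unset Printing Implicit Defensive.
Import Order.TTheory GRing.Theory Num.Theory.
Local Open Scope classical_set_scope.
Local Open Scope ring_scope.

Definition edot (R : realType) (d : nat) (u v : 'rV[R]_d) : R :=
  \sum_(i < d) u ord0 i * v ord0 i.

Definition enorm (R : realType) (d : nat) (u : 'rV[R]_d) : R :=
  Num.sqrt (\sum_(i < d) u ord0 i ^+ 2).

Definition locally_lipschitz (R : realType) (d : nat) (f : 'rV[R]_d -> R) : Prop :=
  forall x : 'rV[R]_d, exists r : R, exists L : R, 0 < r /\
    forall y z : 'rV[R]_d, enorm (y - x) < r -> enorm (z - x) < r ->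
      `|f y - f z| <= L * enorm (y - z).

Definition clarke_quot (R : realType) (d : nat) (f : 'rV[R]_d -> R)
  (x v : 'rV[R]_d) (delta : R) : set (\bar R) :=
  [set z | exists y : 'rV[R]_d, exists t : R,
     [/\ enorm (y - x) < delta, 0 < t, t < delta &
         z = ((f (y + t *: v) - f y) / t)%:E]].

(* Clarke generalized directional derivative
   f°(x; v) = limsup_{y -> x, t downarrow 0} (f(y + t v) - f(y)) / t
            = inf_{delta > 0} sup_{|y - x| < delta, 0 < t < delta} ... *)
Definition clarke_dd (R : realType) (d : nat) (f : 'rV[R]_d -> R)
  (x v : 'rV[R]_d) : \bar R :=
  ereal_inf [set ereal_sup (clarke_quot f x v delta) | delta in [set e : R | 0 < e]].

Definition clarke_subdiff (R : realType) (d : nat) (f : 'rV[R]_d -> R)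
  (x : 'rV[R]_d) : set 'rV[R]_d :=
  [set zeta | forall v : 'rV[R]_d, ((edot zeta v)%:E <= clarke_dd f x v)%E].

Definition SPB (R : realType) (d : nat) (f : 'rV[R]_d -> R)
  (R1 R2 : R) (m : nat) : Prop :=
  [/\ 0 <= R1, 0 < R2, (R1 = 0 <-> m = 0%N), locally_lipschitz f &
      forall x : 'rV[R]_d, forall zeta, clarke_subdiff f x zeta ->
        enorm zeta <= R1 * enorm x ^+ m + R2].

(* Main.v *)
Require Import Defs.
From HB Require Import structures.
From mathcomp Require Import all_boot all_order all_algebra.
From mathcomp Require Import all_classical all_reals ereal.
From mathcomp Require Import topology normedtype derive realfun.
From mathcomp Require Import ring lra.
Import Order.TTheory GRing.Theory Num.Theory.
Local Open Scope ring_scope.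

Module Helpers.
Import numFieldNormedType.Exports.
Set Implicit Arguments. Unset Strict Implicit.
Local Open Scope classical_set_scope.

Section Norms.
Variables (R : realType) (d : nat).
Implicit Types u w : 'rV[R]_d.

Definition nsq u : R := \sum_(i < d) u ord0 i ^+ 2.

Lemma nsq_ge0 u : 0 <= nsq u.
Proof. by apply: sumr_ge0 => i _; exact: sqr_ge0. Qed.

Lemma enorm_ge0 u : 0 <= enorm u.
Proof. exact: sqrtr_ge0. Qed.

Lemma enorm_sqr u : enorm u ^+ 2 = nsq u.
Proof. by rewrite /enorm sqr_sqrtr // nsq_ge0. Qed.

Lemma nsq_expand (l : R) u w :
  \sum_(i < d) (l * u ord0 i - w ord0 i) ^+ 2 = l ^+ 2 * nsq u - 2 * l * edot u w + nsq w.
Proof.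
rewrite /nsq /edot mulr_sumr mulr_sumr -sumrB -big_split /=.
by apply: eq_bigr => i _; ring.
Qed.

Lemma edot_sqr u w : edot u w ^+ 2 <= nsq u * nsq w.
Proof.
have [A0|Apos] := eqVneq (nsq u) 0.
  have ui : forall i, u ord0 i = 0.
    move=> i; apply/eqP; rewrite -sqrf_eq0; apply/eqP.
    by apply: (psumr_eq0P (P := predT) _ A0) => // j _; exact: sqr_ge0.
  rewrite /edot big1 ?expr0n ?A0 ?mul0r //= => i _; by rewrite ui mul0r.
have A0 : 0 < nsq u by rewrite lt0r Apos nsq_ge0.
have := nsq_expand (edot u w / nsq u) u w.
have H0 : 0 <= \sum_(i < d) (edot u w / nsq u * u ord0 i - w ord0 i) ^+ 2.
  by apply: sumr_ge0 => i _; exact: sqr_ge0.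
move=> E; rewrite E in H0.
set D := edot u w in H0 *; set A := nsq u in H0 A0 *; set B := nsq w in H0 *.
have : 0 <= A * ((D / A) ^+ 2 * A - 2 * (D / A) * D + B) by apply: mulr_ge0 => //; exact: ltW.
have -> : A * ((D / A) ^+ 2 * A - 2 * (D / A) * D + B) = A * B - D ^+ 2.
  by field; rewrite gt_eqF.
by rewrite subr_ge0.
Qed.

Lemma cauchy_schwarz u w : edot u w <= enorm u * enorm w.
Proof.
have h := edot_sqr u w.
rewrite -!enorm_sqr in h.
have := enorm_ge0 u; have := enorm_ge0 w.
set D := edot u w; set a := enorm u; set b := enorm w => b0 a0.
have ab0 : 0 <= a * b by exact: mulr_ge0.
have [D0|D0] := lerP D 0; first lra.
rewrite -(@ler_pXn2r _ 2) ?nnegrE //; last exact: ltW.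
by rewrite exprMn.
Qed.

Lemma enormD u w : enorm (u + w) <= enorm u + enorm w.
Proof.
have h1 : nsq (u + w) = nsq u + 2 * edot u w + nsq w.
  rewrite /nsq /edot mulr_sumr -!big_split /=; apply: eq_bigr => i _.
  by rewrite mxE; ring.
have h2 := cauchy_schwarz u w.
have := enorm_ge0 u; have := enorm_ge0 w; have := enorm_ge0 (u + w).
have := enorm_sqr (u + w); have := enorm_sqr u; have := enorm_sqr w.
nra.
Qed.

Lemma enormZ (k : R) u : enorm (k *: u) = `|k| * enorm u.
Proof.
rewrite /enorm -sqrtr_sqr -sqrtrM ?sqr_ge0 //; congr Num.sqrt.
rewrite mulr_sumr; apply: eq_bigr => i _; rewrite mxE; ring.
Qed.

Lemma enormN u : enorm (- u) = enorm u.
Proof. by rewrite -scaleN1r enormZ normrN normr1 mul1r. Qed.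

Lemma enormB u w : enorm (u - w) = enorm (w - u).
Proof. by rewrite -enormN opprB. Qed.

Lemma enorm0 : enorm (0 : 'rV[R]_d) = 0.
Proof. by rewrite -(scale0r (0 : 'rV[R]_d)) enormZ normr0 mul0r. Qed.

End Norms.

Lemma pow_convex (R : realType) (a b : R) (m : nat) : 0 <= a -> 0 <= b ->
  (a + b) ^+ m <= 2 ^+ m / 2 * (a ^+ m + b ^+ m).
Proof.
move=> a0 b0; elim: m => [|m IH].
  by rewrite !expr0; lra.
have key : (a + b) * (a ^+ m + b ^+ m) <= 2 * (a ^+ m.+1 + b ^+ m.+1).
  have [ab|ba] := lerP a b.
    have : a ^+ m <= b ^+ m by apply: lerXn2r; rewrite ?nnegrE.
    rewrite !exprS; nra.
  have : b ^+ m <= a ^+ m by apply: lerXn2r; rewrite ?nnegrE // ltW.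
  rewrite !exprS; nra.
have p0 : 0 <= 2 ^+ m / 2 :> R by apply: divr_ge0; [exact: exprn_ge0|].
rewrite exprS (exprS 2).
apply: (le_trans (ler_wpM2l (addr_ge0 a0 b0) IH)).
rewrite mulrCA.
have -> : 2 * 2 ^+ m / 2 * (a ^+ m.+1 + b ^+ m.+1) = 2 ^+ m / 2 * (2 * (a ^+ m.+1 + b ^+ m.+1)) by ring.
exact: ler_wpM2l.
Qed.

Section HBsec.
Variables (R : realType) (d : nat).
Notation V := 'rV[R]_d.

Definition Sublin (q : V -> R) :=
  (forall a b, q (a + b) <= q a + q b) /\ (forall t a, 0 <= t -> q (t *: a) = t * q a).

Definition Odd (q : V -> R) u := q (- u) = - q u.

Lemma Sublin0 q : Sublin q -> q 0 = 0.
Proof. by case=> _ h; rewrite -(scale0r (0 : V)) h // mul0r. Qed.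

Lemma Odd_add q u : Sublin q -> Odd q u -> forall w s, q (w + s *: u) = q w + s * q u.
Proof.
move=> [hD hZ] hO w s.
have [s0|s0] := lerP 0 s.
  apply/eqP; rewrite eq_le; apply/andP; split.
    by rewrite -hZ //; exact: hD.
  have h1 := hD (w + s *: u) (s *: - u).
  rewrite hZ // hO scalerN addrK in h1; lra.
have s0' : 0 <= - s by lra.
have E : s *: u = (- s) *: (- u) by rewrite scaleNr scalerN opprK.
apply/eqP; rewrite eq_le; apply/andP; split.
  rewrite E; apply: le_trans (hD w ((- s) *: (- u))) _; rewrite hZ // hO; lra.
have h1 := hD (w + s *: u) ((- s) *: u).
rewrite hZ // scaleNr addrK in h1; lra.
Qed.

Definition ext (q : V -> R) u (w : V) : R :=
  inf [set q (w + t *: u) - t * q u | t in [set t : R | 0 <= t]].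

Lemma ext_lb q u w : Sublin q -> lbound [set q (w + t *: u) - t * q u | t in [set t : R | 0 <= t]] (- q (- w)).
Proof.
move=> [hD hZ] _ [t t0 <-].
have := hD (w + t *: u) (- w); rewrite addrC addKr hZ //; lra.
Qed.

Lemma ext_le q u w t : Sublin q -> 0 <= t -> ext q u w <= q (w + t *: u) - t * q u.
Proof.
move=> hq t0; apply: ge_inf; last by exists t.
by exists (- q (- w)); exact: ext_lb.
Qed.

Lemma ext_ge q u w x : (forall t, 0 <= t -> x <= q (w + t *: u) - t * q u) -> x <= ext q u w.
Proof.
move=> h; apply: lb_le_inf; first by exists (q (w + 0 *: u) - 0 * q u), 0 => //=.
by move=> _ [t t0 <-]; exact: h.
Qed.

Lemma ext_below q u w : Sublin q -> ext q u w <= q w.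
Proof. by move=> hq; have := ext_le u w hq (lexx 0); rewrite scale0r addr0 mul0r subr0. Qed.

Lemma ext_Sub q u : Sublin q -> Sublin (ext q u).
Proof.
move=> hq; have [hD hZ] := hq; split.
  move=> a b.
  have H : forall s t, 0 <= s -> 0 <= t -> ext q u (a + b) - (q (b + t *: u) - t * q u) <= q (a + s *: u) - s * q u.
    move=> s t s0 t0.
    have := ext_le u (a + b) hq (addr_ge0 s0 t0).
    have := hD (a + s *: u) (b + t *: u).
    have -> : a + s *: u + (b + t *: u) = a + b + (s + t) *: u by rewrite scalerDl addrACA.
    lra.
  have H2 : forall t, 0 <= t -> ext q u (a + b) - (q (b + t *: u) - t * q u) <= ext q u a.
    by move=> t t0; apply: ext_ge => s s0; exact: H.
  have H3 : ext q u (a + b) - ext q u a <= ext q u b.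
    by apply: ext_ge => t t0; have := H2 t t0; lra.
  lra.
move=> t a t0.
have [->|tpos] := eqVneq t 0.
  rewrite scale0r mul0r; apply/eqP; rewrite eq_le; apply/andP; split.
    by have := ext_le u 0 hq (lexx 0); rewrite scale0r addr0 mul0r subr0 (Sublin0 hq).
  apply: ext_ge => s s0; rewrite add0r hZ //; lra.
have tp : 0 < t by rewrite lt0r tpos.
apply/eqP; rewrite eq_le; apply/andP; split.
  have : ext q u (t *: a) / t <= ext q u a.
    apply: ext_ge => s s0.
    rewrite ler_pdivrMr //.
    have := ext_le u (t *: a) hq (mulr_ge0 (ltW tp) s0).
    rewrite -scalerA -scalerDr hZ; last exact: ltW.
    lra.
  by rewrite ler_pdivrMr // mulrC.
apply: ext_ge => s s0.
have st0 : 0 <= s / t by apply: divr_ge0 => //; exact: ltW.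
have := ext_le u a hq st0.
have -> : t *: a + s *: u = t *: (a + (s / t) *: u).
  by rewrite scalerDr scalerA mulrCA mulfV ?mulr1 // gt_eqF.
rewrite hZ; last exact: ltW.
have -> : s * q u = t * ((s / t) * q u) by field.
move=> h; rewrite -mulrBr; apply: ler_wpM2l => //; exact: ltW.
Qed.

Lemma ext_self q u : Sublin q -> ext q u u = q u /\ Odd (ext q u) u.
Proof.
move=> hq; have [hD hZ] := hq.
have E1 : ext q u u = q u.
  apply/eqP; rewrite eq_le; apply/andP; split; first exact: ext_below.
  apply: ext_ge => t t0.
  have -> : u + t *: u = (1 + t) *: u by rewrite scalerDl scale1r.
  rewrite hZ; last lra. lra.
split => //; rewrite /Odd E1.
apply/eqP; rewrite eq_le; apply/andP; split.
  have := ext_le u (- u) hq ler01; rewrite scale1r addNr Sublin0 //; lra.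
apply: ext_ge => t t0.
have h := hD (- u + t *: u) u.
have e : - u + t *: u + u = t *: u by rewrite addrAC addNr add0r.
rewrite e hZ // in h; lra.
Qed.

Lemma ext_odd q u u0 : Sublin q -> Odd q u0 -> ext q u u0 = q u0 /\ Odd (ext q u) u0.
Proof.
move=> hq hO.
have key : forall w s, ext q u (w + s *: u0) = ext q u w + s * q u0.
  move=> w s; apply/eqP; rewrite eq_le; apply/andP; split.
    have : ext q u (w + s *: u0) - s * q u0 <= ext q u w.
      apply: ext_ge => t t0.
      have := ext_le u (w + s *: u0) hq t0.
      have e : w + s *: u0 + t *: u = (w + t *: u) + s *: u0 by rewrite addrAC.
      rewrite e (Odd_add hq hO); lra.
    lra.
  have : ext q u w + s * q u0 <= ext q u (w + s *: u0).
    apply: ext_ge => t t0.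
    have := ext_le u w hq t0.
    have := Odd_add hq hO (w + t *: u) s.
    have e : w + s *: u0 + t *: u = (w + t *: u) + s *: u0 by rewrite addrAC.
    rewrite e; lra.
  lra.
have e0 : ext q u 0 = 0 by apply: Sublin0; exact: ext_Sub.
have E1 := key 0 1; rewrite add0r scale1r e0 add0r mul1r in E1.
have E2 := key 0 (-1); rewrite add0r scaleN1r e0 add0r mulN1r in E2.
by split => //; rewrite /Odd E1 E2.
Qed.

Lemma fold_ext (l : seq V) : forall q, Sublin q ->
  [/\ Sublin (foldl ext q l), (forall w, foldl ext q l w <= q w),
      (forall u, Odd q u -> foldl ext q l u = q u /\ Odd (foldl ext q l) u) &
      (forall u, u \in l -> Odd (foldl ext q l) u)].
Proof.
elim: l => [|u l IH] q hq /=.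
  by split => // w; exact: lexx.
have hq' := ext_Sub u hq.
have [h1 h2 h3 h4] := IH _ hq'.
split => //.
- by move=> w; apply: le_trans (h2 w) _; exact: ext_below.
- move=> u0 hO; have [e o] := ext_odd u hq hO.
  by have [e' o'] := h3 u0 o; split => //; rewrite e' e.
- move=> u0; rewrite inE => /orP [/eqP ->|hin]; last exact: h4.
  by have [_ o] := ext_self u hq; have [_ o'] := h3 u o.
Qed.

Lemma linear_of q : Sublin q -> (forall i : 'I_d, Odd q (delta_mx 0 i)) ->
  forall w, q w = edot (\row_i q (delta_mx 0 i)) w.
Proof.
move=> hq hO w.
have H : forall r : seq 'I_d,
    q (\sum_(i <- r) w 0 i *: delta_mx 0 i) = \sum_(i <- r) w 0 i * q (delta_mx 0 i).
  elim=> [|i r IHr]; first by rewrite !big_nil Sublin0.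
  by rewrite !big_cons addrC Odd_add // IHr addrC.
rewrite {1}(row_sum_delta w) H /edot; apply: eq_bigr => i _.
by rewrite mxE mulrC.
Qed.

Lemma hahn_banach q v : Sublin q ->
  exists zeta : V, (forall w, edot zeta w <= q w) /\ edot zeta v = q v.
Proof.
move=> hq.
have hq1 := ext_Sub v hq.
have [e1 o1] := ext_self v hq.
have [h1 h2 h3 h4] := fold_ext [seq delta_mx 0 i | i : 'I_d] hq1.
set Q := foldl _ _ _ in h1 h2 h3 h4.
have hO : forall i : 'I_d, Odd Q (delta_mx 0 i).
  move=> i; apply: h4.
  by apply/mapP; exists i => //; rewrite mem_enum.
exists (\row_i Q (delta_mx 0 i)); split.
  move=> w; rewrite -linear_of //; apply: le_trans (h2 w) _; exact: ext_below.
rewrite -linear_of //.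
by have [-> _] := h3 v o1.
Qed.

End HBsec.

Section Clarke.
Variables (R : realType) (d : nat) (f : 'rV[R]_d -> R).
Hypothesis hlip : locally_lipschitz f.
Notation V := 'rV[R]_d.

Definition quot (y : V) (t : R) (w : V) := (f (y + t *: w) - f y) / t.

Definition U (z w : V) := [set a : R | exists2 del : R, 0 < del &
  forall y t, enorm (y - z) < del -> 0 < t -> t < del -> quot y t w <= a].

Definition q0 z w := inf (U z w).

Lemma lip_quot z w : exists del, exists L, 0 < del /\
  forall y t, enorm (y - z) < del -> 0 < t -> t < del -> `|quot y t w| <= L * enorm w.
Proof.
have [r [L [r0 hL]]] := hlip z.
have nw := enorm_ge0 w.
exists (r / (1 + enorm w)), L; split; first by apply: divr_gt0 => //; lra.
move=> y t hy t0 ht.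
have h1 : r / (1 + enorm w) + r / (1 + enorm w) * enorm w = r.
  by field; lra.
have h2 : r / (1 + enorm w) <= r.
  rewrite ler_pdivrMr; last lra.
  nra.
have hyz : enorm (y - z) < r by lra.
have hyt : enorm (y + t *: w - z) < r.
  have -> : y + t *: w - z = (y - z) + t *: w by rewrite addrAC.
  apply: (le_lt_trans (enormD _ _)); rewrite enormZ gtr0_norm //.
  nra.
have := hL _ _ hyt hyz.
have -> : y + t *: w - y = t *: w by rewrite addrAC subrr add0r.
rewrite enormZ (gtr0_norm t0) /quot normrM normfV (gtr0_norm t0).
move=> h; rewrite ler_pdivrMr //; nra.
Qed.

Lemma min_pos (a b : R) : 0 < a -> 0 < b -> exists c, [/\ 0 < c, c <= a & c <= b].
Proof.
move=> a0 b0; have [ab|ba] := leP a b.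
  by exists a; split => //; lra.
by exists b; split => //; lra.
Qed.

Lemma U_inf z w : nonempty (U z w) /\ has_lbound (U z w).
Proof.
have [del [L [d0 h]]] := lip_quot z w.
split.
  exists (L * enorm w), del => // y t hy t0 ht.
  by apply: le_trans (h y t hy t0 ht); exact: ler_norm.
exists (- (L * enorm w)) => a [e e0 he].
have [c [c0 c1 c2]] := min_pos d0 e0.
have hz : enorm (z - z) = 0 by rewrite subrr enorm0.
have := h z (c / 2) ltac:(lra) ltac:(lra) ltac:(lra).
have := he z (c / 2) ltac:(lra) ltac:(lra) ltac:(lra).
move=> h1 h2; rewrite ler_norml in h2; case/andP: h2 => h2 _; lra.
Qed.

Lemma q0_le z w a : U z w a -> q0 z w <= a.
Proof. by move=> ha; apply: ge_inf => //; exact: (U_inf z w).2. Qed.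

Lemma q0_ge z w x : (forall a, U z w a -> x <= a) -> x <= q0 z w.
Proof. by move=> h; apply: lb_le_inf => //; exact: (U_inf z w).1. Qed.

Lemma quot0 y t : 0 < t -> quot y t 0 = 0.
Proof. by move=> t0; rewrite /quot scaler0 addr0 subrr mul0r. Qed.

Lemma q0_Sub z : Sublin (q0 z).
Proof.
split.
  move=> a b.
  have H : forall al be, U z a al -> U z b be -> U z (a + b) (al + be).
    move=> al be [d1 d1p h1] [d2 d2p h2].
    have na := enorm_ge0 a.
    have d2' : 0 < d2 / (1 + enorm a) by apply: divr_gt0 => //; lra.
    have [c [c0 c1 c2]] := min_pos d1p d2'.
    have e1 : d2 / (1 + enorm a) + d2 / (1 + enorm a) * enorm a = d2 by field; lra.
    have e2 : d2 / (1 + enorm a) <= d2 by rewrite ler_pdivrMr; [nra|lra].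
    exists c => // y t hy t0 ht.
    have q1 := h1 y t ltac:(lra) t0 ltac:(lra).
    have hy' : enorm (y + t *: a - z) < d2.
      have -> : y + t *: a - z = (y - z) + t *: a by rewrite addrAC.
      apply: (le_lt_trans (enormD _ _)); rewrite enormZ gtr0_norm //; nra.
    have q2 := h2 (y + t *: a) t hy' t0 ltac:(lra).
    have -> : quot y t (a + b) = quot (y + t *: a) t b + quot y t a.
      rewrite /quot scalerDr addrA; field; lra.
    lra.
  have H2 : forall be, U z b be -> q0 z (a + b) - be <= q0 z a.
    move=> be hb; apply: q0_ge => al ha.
    have := q0_le (H _ _ ha hb); lra.
  have H3 : q0 z (a + b) - q0 z a <= q0 z b.
    by apply: q0_ge => be hb; have := H2 be hb; lra.
  lra.
have Hpos : forall t a al, 0 < t -> U z a al -> U z (t *: a) (t * al).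
  move=> t a al t0 [e e0 he].
  have e' : 0 < e / t by exact: divr_gt0.
  have [c [c0 c1 c2]] := min_pos e0 e'.
  exists c => // y s hy s0 hs.
  have hst : s * t < e by rewrite -ltr_pdivlMr //; lra.
  have := he y (s * t) ltac:(lra) ltac:(nra) hst.
  have -> : quot y s (t *: a) = t * quot y (s * t) a.
    by rewrite /quot scalerA; field; apply/andP; split; rewrite gt_eqF.
  move=> h; rewrite ler_pM2l //.
have Hle : forall t a, 0 < t -> q0 z (t *: a) <= t * q0 z a.
  move=> t a t0.
  have : q0 z (t *: a) / t <= q0 z a.
    apply: q0_ge => al ha; rewrite ler_pdivrMr // mulrC.
    exact: q0_le (Hpos _ _ _ t0 ha).
  by rewrite ler_pdivrMr // mulrC.
move=> t a; rewrite le0r => /orP [/eqP ->|t0].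
  rewrite scale0r mul0r; apply/eqP; rewrite eq_le; apply/andP; split.
    apply: q0_le; exists 1 => // y s _ s0 _; rewrite quot0 //.
  apply: q0_ge => al [e e0 he].
  have := he z (e / 2); rewrite subrr enorm0 quot0; last lra.
  by apply; lra.
apply/eqP; rewrite eq_le Hle //=.
have := Hle (t^-1) (t *: a); rewrite invr_gt0 scalerA mulVf ?gt_eqF // scale1r.
move=> h; have := ler_wpM2l (ltW t0) (h t0).
by rewrite mulrA mulfV ?gt_eqF // mul1r.
Qed.

Lemma q0_le_dd z w : ((q0 z w)%:E <= clarke_dd f z w)%E.
Proof.
rewrite /clarke_dd; apply: le_ereal_inf_tmp => _ [del /= del0 <-].
have mem : forall y t, enorm (y - z) < del -> 0 < t -> t < del ->
    clarke_quot f z w del (quot y t w)%:E.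
  by move=> y t hy t0 ht; exists y, t; split.
have hz : enorm (z - z) < del by rewrite subrr enorm0.
case E: (ereal_sup _) => [s| |].
- rewrite lee_fin; apply: q0_le; exists del => // y t hy t0 ht.
  have := ereal_sup_ubound (mem y t hy t0 ht); rewrite E lee_fin; exact.
- exact: leey.
- have h1 : 0 < del / 2 by lra.
  have h2 : del / 2 < del by lra.
  have := ereal_sup_ubound (mem z (del / 2) hz h1 h2).
  by rewrite E.
Qed.

End Clarke.

Section MVT.
Variables (R : realType) (d : nat) (f : 'rV[R]_d -> R).
Hypothesis hlip : locally_lipschitz f.
Notation V := 'rV[R]_d.

Lemma line_cont (a v : V) (c : R) : continuous (fun t : R => f (a + t *: v) - t * c).
Proof.
move=> t0; apply/cvgrPdist_lt => e e0.
have [r [L [r0 hL]]] := hlip (a + t0 *: v).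
have nv := enorm_ge0 v.
set K := (1 + `|L|) * (1 + enorm v) + `|c|.
have K0 : 0 < K by rewrite /K; have := normr_ge0 L; have := normr_ge0 c; nra.
have r' : 0 < r / (1 + enorm v) by apply: divr_gt0 => //; lra.
have e' : 0 < e / K by exact: divr_gt0.
have [eta [eta0 eta1 eta2]] := min_pos r' e'.
apply/nbhs_normP; exists eta => //= t; rewrite /ball_ /= => ht.
have X0 := normr_ge0 (t0 - t).
have hr1 : r / (1 + enorm v) * (1 + enorm v) = r by field; lra.
have hy : enorm (a + t *: v - (a + t0 *: v)) < r.
  have -> : a + t *: v - (a + t0 *: v) = (t - t0) *: v by apply/rowP => i; rewrite !mxE; ring.
  rewrite enormZ distrC.
  have : eta * (1 + enorm v) <= r.
    by rewrite -hr1; apply: ler_wpM2r => //; lra.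
  nra.
have hz : enorm (a + t0 *: v - (a + t0 *: v)) < r by rewrite subrr enorm0.
have := hL _ _ hz hy.
have -> : a + t0 *: v - (a + t *: v) = (t0 - t) *: v by apply/rowP => i; rewrite !mxE; ring.
rewrite enormZ => hf.
have -> : f (a + t0 *: v) - t0 * c - (f (a + t *: v) - t * c)
   = (f (a + t0 *: v) - f (a + t *: v)) - (t0 - t) * c by ring.
apply: (le_lt_trans (ler_normB _ _)).
rewrite normrM.
have hL' : L * (`|t0 - t| * enorm v) <= `|L| * (`|t0 - t| * enorm v).
  by apply: ler_wpM2r; [exact: mulr_ge0|exact: ler_norm].
have hK : eta * K <= e.
  by have := ler_wpM2r (ltW K0) eta2; rewrite divfK // gt_eqF.
have nL := normr_ge0 L; have nc := normr_ge0 c.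
have : `|L| * (`|t0 - t| * enorm v) + `|t0 - t| * `|c| <= `|t0 - t| * K.
  rewrite /K; nra.
have : `|t0 - t| * K < eta * K by rewrite ltr_pM2r.
lra.
Qed.

Lemma mvt_ineq (a b : V) : exists2 s : R, 0 <= s <= 1 &
  f b - f a <= q0 f (a + s *: (b - a)) (b - a).
Proof.
set v := b - a; set c := f b - f a.
set h := fun t : R => f (a + t *: v) - t * c.
have [t1 t1in hmax] := EVT_max (@ler01 R) (continuous_subspaceT (@line_cont a v c)).
have h01 : h 0 = h 1.
  have eb : a + 1 *: v = b by rewrite scale1r /v addrC subrK.
  by rewrite /h eb scale0r addr0 mul0r subr0 mul1r /c; ring.
set ts := if t1 == 0 then 1 else t1.
have tsin : 0 < ts <= 1.
  rewrite /ts; case: eqP => [_|t10]; first by rewrite ltr01 lexx.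
  by move: t1in; rewrite in_itv /= => /andP [t1a t1b]; rewrite t1b andbT lt0r t1a andbT; apply/eqP.
have tsmax : forall t, 0 <= t <= 1 -> h t <= h ts.
  move=> t tin; rewrite /ts; case: eqP => [t10|_].
    by rewrite -h01 -t10; apply: hmax; rewrite in_itv.
  by apply: hmax; rewrite in_itv.
exists ts; first by case/andP: tsin => ? ->; rewrite ltW.
apply: q0_ge => // al [del del0 hdel].
have nv := enorm_ge0 v.
have ts0 : 0 < ts by case/andP: tsin.
have d' : 0 < del / (2 * (1 + enorm v)) by apply: divr_gt0 => //; nra.
have [s [s0 s1 s2]] := min_pos ts0 d'.
have hsd : s * (2 * (1 + enorm v)) <= del.
  by rewrite -ler_pdivlMr //; nra.
set y := a + (ts - s) *: v.
have hy : enorm (y - (a + ts *: v)) < del.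
  have -> : y - (a + ts *: v) = (- s) *: v by apply/rowP => i; rewrite !mxE; ring.
  rewrite enormZ normrN gtr0_norm //; nra.
have hs : s < del by nra.
have := hdel y s hy s0 hs; rewrite /quot.
have -> : y + s *: v = a + ts *: v by apply/rowP => i; rewrite !mxE; ring.
have hm := tsmax (ts - s) ltac:(apply/andP; split; lra).
rewrite /h in hm.
move=> hq; apply: le_trans hq.
rewrite ler_pdivlMr //; rewrite -/v -/c; lra.
Qed.

End MVT.

End Helpers.
Import Helpers.

Theorem lemma3p3 (R : realType) (d : nat) (f : 'rV[R]_d -> R)
  (R1 R2 : R) (m : nat) :
  SPB f R1 R2 m ->
  forall x y : 'rV[R]_d,
    `|f x - f y| <=
      (2 ^+ m / 2 * R1 * enorm x ^+ m + 2 ^+ m / 2 * R1 * enorm (y - x) ^+ m + R2)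
      * enorm (x - y).
Proof.
move=> [R1ge R2pos hR1m hlip hbound] x y.
have bnd : forall z v, q0 f z v <= (R1 * enorm z ^+ m + R2) * enorm v.
  move=> z v.
  have [zeta [hz hv]] := hahn_banach v (q0_Sub hlip z).
  have sub : clarke_subdiff f z zeta.
    move=> w; apply: le_trans (q0_le_dd hlip z w); rewrite lee_fin; exact: hz.
  have hb := hbound z zeta sub.
  rewrite -hv; apply: le_trans (cauchy_schwarz zeta v) _.
  apply: ler_wpM2r => //; exact: enorm_ge0.
set B := 2 ^+ m / 2 * R1 * enorm x ^+ m + 2 ^+ m / 2 * R1 * enorm (y - x) ^+ m + R2.
have zb : forall s, 0 <= s <= 1 -> R1 * enorm (x + s *: (y - x)) ^+ m + R2 <= B.
  move=> s /andP [s0 s1].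
  have nx := enorm_ge0 x; have nyx := enorm_ge0 (y - x).
  have h1 : enorm (x + s *: (y - x)) <= enorm x + enorm (y - x).
    apply: le_trans (enormD _ _) _; rewrite enormZ ger0_norm //.
    have : s * enorm (y - x) <= enorm (y - x) by rewrite ler_piMl.
    lra.
  have h2 : enorm (x + s *: (y - x)) ^+ m <= (enorm x + enorm (y - x)) ^+ m.
    by apply: lerXn2r; rewrite ?nnegrE ?enorm_ge0 //; lra.
  have h3 := pow_convex m nx nyx.
  have h4 : R1 * enorm (x + s *: (y - x)) ^+ m <= R1 * (2 ^+ m / 2 * (enorm x ^+ m + enorm (y - x) ^+ m)).
    by apply: ler_wpM2l => //; exact: le_trans h2 h3.
  have h5 : R1 * (2 ^+ m / 2 * (enorm x ^+ m + enorm (y - x) ^+ m))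
     = 2 ^+ m / 2 * R1 * enorm x ^+ m + 2 ^+ m / 2 * R1 * enorm (y - x) ^+ m by ring.
  by rewrite /B -h5 lerD2r.
have [s1 s1in h1] := mvt_ineq hlip x y.
have [s2 s2in h2] := mvt_ineq hlip y x.
have e2 : y + s2 *: (x - y) = x + (1 - s2) *: (y - x).
  by apply/rowP => i; rewrite !mxE; ring.
have s2in' : 0 <= 1 - s2 <= 1 by case/andP: s2in => ? ?; apply/andP; split; lra.
have A1 := le_trans h1 (bnd _ _).
have A2 := le_trans h2 (bnd _ _).
rewrite e2 in A2.
have B1 := ler_wpM2r (enorm_ge0 (y - x)) (zb _ s1in).
have B2 := ler_wpM2r (enorm_ge0 (x - y)) (zb _ s2in').
have C1 := le_trans A1 B1.
rewrite (enormB y x) in C1.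
have C2 := le_trans A2 B2.
rewrite ler_norml C2 andbT lerNl opprB.
exact: C1.
Qed.
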